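(* Let $\mathcal{X}$ be a set and let $G$ be an undirected graph on vertex set $\mathcal{X}$ with non-negative edge weights. Let $\varepsilon:\mathcal{X}\times\mathcal{X}\to\mathbb{R}\cup\{\infty\}$ be the shortest-path distance in $G$ (sum of edge weights along a path, minimized over paths). Let $M:\mathcal{X}^n\to\mathcal{Y}$ be a randomized algorithm. Suppose that for every pair $x,x'\in\mathcal{X}^n$ differing only in a single entry $i\in[n]$ such that $\{x_i,x'_i\}$ is an edge of $G$ with weight $\varepsilon_0$, we have $D_\infty(M(x)\|M(x'))\le \varepsilon_0$ (respectively, $D_*(M(x)\|M(x'))\le \frac12\varepsilon_0^2$). Then $M$ is $\varepsilon$-$\nabla$DP (respectively, $\varepsilon$-$\nabla$CDP).
   Context: For probability distributions $P,Q$ on a common space with $P\ll Q$: for $\lambda\in(1,\infty)$, $D_\lambda(P\|Q)=\frac{1}{\lambda-1}\log \mathbb{E}_{X\sim P}[(P(X)/Q(X))^{\lambda-1}]$ (Radon–Nikodym derivative), $D_*(P\|Q)=\sup_{\lambda\in(1,\infty)}\frac1\lambda D_\lambda(P\|Q)$, and $D_\infty(P\|Q)=\sup_{S:P(S)>0}\log(P(S)/Q(S))$; if $P\not\ll Q$ all these are $\infty$. For a symmetric non-negative function $\varepsilon:\mathcal{X}\times\mathcal{X}\to\mathbb{R}$, a randomized $M:\mathcal{X}^n\to\mathcal{Y}$ is $\varepsilon$-partially DP ($\varepsilon$-$\nabla$DP) if for all $x,x'\in\mathcal{X}^n$ differing only in entry $i$ and all measurable $S$, $\Pr[M(x)\in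 S]\le e^{\varepsilon(x_i,x'_i)}\Pr[M(x')\in S]$; it is $\varepsilon$-partially CDP ($\varepsilon$-$\nabla$CDP) if for all such $x,x'$, $D_*(M(x)\|M(x'))\le\frac12\varepsilon(x_i,x'_i)^2$. *)

(* Defs.v *)
From HB Require Import structures.
From mathcomp Require Import all_boot all_order all_algebra.
From mathcomp Require Import all_classical all_reals all_analysis.
Set Implicit Arguments. Unset Strict Implicit. Unset Printing Implicit Defensive.
Import Order.TTheory GRing.Theory Num.Theory.
Local Open Scope classical_set_scope.
Local Open Scope ring_scope.

Record wgraph (R : realType) (X : Type) := WGraph {
  edge : X -> X -> Prop;
  weight : X -> X -> R;
  edge_sym : forall x y, edge x y -> edge y x;
  weight_sym : forall x y, edge x y -> weight x y = weight y x;
  weight_ge0 : forall x y, edge x y -> 0 <= weight x y }.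

(* [walk G x p y]: x = v0, p = [:: v1; ...; vk] and vk = y, with
   consecutive vertices adjacent in G (k = 0 means x = y). *)
Fixpoint walk (R : realType) (X : Type) (G : wgraph R X) (x : X) (p : seq X) (y : X)
  : Prop :=
  match p with
  | [::] => x = y
  | z :: p' => edge G x z /\ walk G z p' y
  end.

Fixpoint walk_len (R : realType) (X : Type) (G : wgraph R X) (x : X) (p : seq X) : R :=
  match p with
  | [::] => 0
  | z :: p' => weight G x z + walk_len G z p'
  end.

(* shortest-path distance, +oo when there is no path *)
Definition spdist (R : realType) (X : Type) (G : wgraph R X) (x y : X) : \bar R :=
  ereal_inf [set (walk_len G x p)%:E | p in [set p | walk G x p y]].

Local Open Scope ereal_scope.
Local Open Scope charge_scope.

Definition log_ratio (R : realType) (p q : \bar R) : \bar R :=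
  if q == 0 then +oo else (ln (fine p / fine q))%R%:E.

Definition Dinf d (Y : measurableType d) (R : realType)
  (P Q : probability Y R) : \bar R :=
  if `[< (P `<< Q) >] then
    ereal_sup [set log_ratio (P S) (Q S) | S in [set S | measurable S /\ 0 < P S]]
  else +oo.

Definition Drenyi d (Y : measurableType d) (R : realType)
  (lam : R) (P Q : probability Y R) : \bar R :=
  if `[< (P `<< Q) >] then
    ((lam - 1)^-1)%R%:E *
      lne (\int[P]_y ((fine ('d (charge_of_finite_measure P) '/d Q y)) `^ (lam - 1))%R%:E)
  else +oo.

Definition Dstar d (Y : measurableType d) (R : realType)
  (P Q : probability Y R) : \bar R :=
  ereal_sup [set (lam^-1)%R%:E * Drenyi lam P Q | lam in [set lam : R | (1 < lam)%R]].

Definition differ_at (X : Type) (n : nat) (i : 'I_n) (x x' : 'I_n -> X) : Prop :=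
  forall j, j != i -> x j = x' j.

(* eps-partial DP, eps valued in R \cup {+oo} (a +oo bound is vacuous) *)
Definition partial_DP (R : realType) (X : Type) (n : nat) d (Y : measurableType d)
  (eps : X -> X -> \bar R) (M : ('I_n -> X) -> probability Y R) : Prop :=
  forall (x x' : 'I_n -> X) (i : 'I_n), differ_at i x x' ->
  forall e : R, eps (x i) (x' i) = e%:E ->
  forall S : set Y, measurable S -> M x S <= (expR e)%:E * M x' S.

Definition partial_CDP (R : realType) (X : Type) (n : nat) d (Y : measurableType d)
  (eps : X -> X -> \bar R) (M : ('I_n -> X) -> probability Y R) : Prop :=
  forall (x x' : 'I_n -> X) (i : 'I_n), differ_at i x x' ->
  Dstar (M x) (M x') <= (2^-1)%R%:E * (eps (x i) (x' i) * eps (x i) (x' i)).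

(* Main.v *)
Require Import Defs.
From HB Require Import structures.
From mathcomp Require Import all_boot all_order all_algebra.
From mathcomp Require Import all_classical all_reals all_analysis measurable_realfun.
From mathcomp Require Import ring lra.
Import Order.TTheory GRing.Theory Num.Theory.
Local Open Scope classical_set_scope.
Local Open Scope ring_scope.
Local Open Scope ereal_scope.
Local Open Scope charge_scope.
Set Implicit Arguments. Unset Strict Implicit.

Lemma key1 (R : realType) (lam c : R) (J : \bar R) : (1 < lam)%R -> 0 <= J ->
  ((lam^-1)%:E * (((lam - 1)^-1)%:E * lne J) <= c%:E) <->
  J <= (expR (lam * (lam - 1) * c))%:E.
Proof.
move=> l1 J0.
have l0 : (0 < lam)%R by rewrite (lt_trans ltr01).
have l10 : (0 < lam - 1)%R by rewrite subr_gt0.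
case: J J0 => [r| |] //= r0.
- have [rle0|rgt0] := leP r 0%R.
  + have -> : r = 0%R by apply/eqP; rewrite eq_le rle0 -lee_fin.
    rewrite gt0_muleNy ?lte_fin ?invr_gt0 // gt0_muleNy ?lte_fin ?invr_gt0 //.
    by split => _; rewrite ?leNye // lee_fin expR_ge0.
  + rewrite -!EFinM !lee_fin mulrA -invfM ler_pdivrMl ?mulr_gt0 //.
    rewrite -ler_expR lnK ?posrE // mulrA.
- rewrite gt0_muley ?lte_fin ?invr_gt0 // gt0_muley ?lte_fin ?invr_gt0 //.
Qed.

Section dens.
Context d (Y : measurableType d) (R : realType).
Implicit Types P Q W : probability Y R.

Definition dens P Q := Radon_Nikodym_SigmaFinite.f P Q.
Definition fd P Q (y : Y) : R := fine (dens P Q y).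
Definition Ip (lam : R) P Q := \int[P]_y ((fd P Q y) `^ (lam - 1))%:E.

Lemma ae_dom P Q (Pr : Y -> Prop) : P `<< Q ->
  (\forall x \ae Q, Pr x) -> (\forall x \ae P, Pr x).
Proof.
move=> PQ [A [mA QA NA]]; exists A; split => //.
have : Q.-null_set A by apply/measure0_null_setP.
by move/PQ/(measure0_null_setP _ mA).
Qed.

Lemma dens_ge0 P Q y : P `<< Q -> 0 <= dens P Q y.
Proof. by move=> PQ; apply: Radon_Nikodym_SigmaFinite.f_ge0. Qed.

Lemma fd_ge0 P Q y : P `<< Q -> (0 <= fd P Q y)%R.
Proof. by move=> PQ; apply: fine_ge0; exact: dens_ge0. Qed.

Lemma densE P Q y : P `<< Q -> dens P Q y = (fd P Q y)%:E.
Proof. by move=> PQ; rewrite /fd fineK //; apply: Radon_Nikodym_SigmaFinite.f_fin_num. Qed.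

Lemma dens_meas P Q : P `<< Q -> measurable_fun [set: Y] (dens P Q : Y -> \bar R).
Proof. by move=> PQ; apply: (measurable_int Q); apply: Radon_Nikodym_SigmaFinite.f_integrable. Qed.

Lemma fd_meas P Q : P `<< Q -> measurable_fun [set: Y] (fd P Q : Y -> R).
Proof.
move=> PQ; apply: (measurableT_comp (fine_measurable _)) => //.
exact: dens_meas.
Qed.

Lemma powfd_meas P Q r : P `<< Q -> measurable_fun [set: Y] (fun y => fd P Q y `^ r : R)%R.
Proof. move=> PQ; apply: (measurableT_comp (measurable_powR _)); exact: fd_meas. Qed.

Lemma Ip_eq (lam : R) P Q : P `<< Q ->
  \int[P]_y ((fine ('d (charge_of_finite_measure P) '/d Q y)) `^ (lam - 1))%:E
  = Ip lam P Q.
Proof.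
move=> PQ; rewrite /Ip; apply: ae_eq_integral => //.
- apply/measurable_EFinP; apply: (measurableT_comp (measurable_powR _)) => //.
  apply: (measurableT_comp (fine_measurable _)) => //.
- apply/measurable_EFinP; exact: powfd_meas.
- have := ae_eq_Radon_Nikodym_SigmaFinite PQ (@measurableT _ Y).
  move/(@ae_dom P Q _ PQ); apply: filterS => y H /H {H}.
  by rewrite /fd /dens => ->.
Qed.

Lemma cov P Q (phi : Y -> R) : P `<< Q -> (forall y, 0 <= phi y)%R ->
  measurable_fun setT phi ->
  \int[P]_y (phi y)%:E = \int[Q]_y (phi y * fd P Q y)%:E.
Proof.
move=> PQ phi0 mphi.
rewrite -(Radon_Nikodym_SigmaFinite.change_of_variables PQ) //.
- by apply: eq_integral => y _; rewrite -/(dens P Q y) densE // EFinM.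
- exact/measurable_EFinP.
Qed.

Lemma Ip_Q (lam : R) P Q : P `<< Q -> (1 < lam)%R ->
  Ip lam P Q = \int[Q]_y ((fd P Q y) `^ lam)%:E.
Proof.
move=> PQ l1; rewrite /Ip (@cov P Q) //; [|by move=> y; apply: powR_ge0|exact: powfd_meas].
apply: eq_integral => y _; congr EFin.
by rewrite mulrC mulr_powRB1 // ?fd_ge0 // (lt_trans ltr01).
Qed.


Lemma Ip_ge0 lam P Q : 0 <= Ip lam P Q.
Proof. by apply: integral_ge0 => y _; rewrite lee_fin powR_ge0. Qed.

Definition Bnd P Q (c : R) := P `<< Q /\
  forall lam : R, (1 < lam)%R -> Ip lam P Q <= (expR (lam * (lam - 1) * c))%:E.

End dens.

Section t.
Context d (Y : measurableType d) (R : realType).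
Implicit Types P Q W : probability Y R.

Lemma Drenyi_E lam P Q : P `<< Q ->
  Drenyi lam P Q = ((lam - 1)^-1)%:E * lne (Ip lam P Q).
Proof. by move=> PQ; rewrite /Drenyi; case: asboolP => [_|/(_ PQ)[]]; rewrite Ip_eq. Qed.

Lemma Dstar_Bnd P Q (c : R) : Dstar P Q <= c%:E -> Bnd P Q c.
Proof.
move=> H.
have Hl : forall lam : R, (1 < lam)%R -> (lam^-1)%:E * Drenyi lam P Q <= c%:E.
  move=> lam l1; apply: le_trans H; apply: ereal_sup_ubound; by exists lam.
have PQ : P `<< Q.
  have := Hl 2%R (ltr1n _ 2); rewrite /Drenyi; case: asboolP => [//|_].
  by rewrite gt0_muley ?lte_fin ?invr_gt0.
split => // lam l1; apply: (proj1 (key1 c l1 (Ip_ge0 lam P Q))).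
by rewrite -Drenyi_E //; apply: Hl.
Qed.

Lemma Bnd_Dstar P Q (c : R) : Bnd P Q c -> Dstar P Q <= c%:E.
Proof.
move=> [PQ H]; apply: ge_ereal_sup => _ [lam l1 <-].
by rewrite Drenyi_E //; apply: (proj2 (key1 c l1 (Ip_ge0 lam P Q))); apply: H.
Qed.

Lemma Bnd_le P Q (c c' : R) : (c <= c')%R -> Bnd P Q c -> Bnd P Q c'.
Proof.
move=> cc [PQ H]; split => // lam l1; apply: le_trans (H _ l1) _.
rewrite lee_fin ler_expR ler_wpM2l // mulr_ge0 // ?subr_ge0 ?ltW //.
by rewrite (lt_trans ltr01).
Qed.

Lemma Bnd_self P : Bnd P P 0.
Proof.
have PP : P `<< P by [].
split => // lam l1; rewrite mulr0 expR0.
have ae1 : ae_eq P setT (dens P P) (cst 1).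
  apply: integral_ae_eq => //.
  - exact: Radon_Nikodym_SigmaFinite.f_integrable.
  - move=> E _ mE; rewrite integral_cst // mul1e.
    by rewrite -Radon_Nikodym_SigmaFinite.f_integral.
rewrite /Ip (@ae_eq_integral _ _ _ P setT (cst 1)) //.
- by rewrite integral_cst // mul1e -[leRHS](probability_setT P).
- apply/measurable_EFinP; exact: powfd_meas.
- apply: filterS ae1 => y H /H; rewrite /fd => -> /=.
  by rewrite powR1.
Qed.
End t.

Lemma Nbound d (Y : measurableType d) (R : realType) (mu : {measure set Y -> \bar R})
  (h : Y -> R) (r A : R) : (0 < r)%R -> (forall y, 0 <= h y)%R ->
  \int[mu]_y (h y `^ r)%:E <= (expR A)%:E ->
  'N[mu]_r%:E[EFin \o h] <= (expR (A / r))%:E.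
Proof.
move=> r0 h0 H; rewrite unlock /=.
under eq_integral => y _ do rewrite ger0_norm //.
have ri : (0 <= r^-1)%R by rewrite invr_ge0 ltW.
have i0 : \int[mu]_y (h y `^ r)%:E \in `[0, +oo].
  by rewrite in_itv /= leey integral_ge0 // => y _; rewrite lee_fin powR_ge0.
have i1 : (expR A)%:E \in `[0, +oo] by rewrite in_itv /= leey lee_fin expR_ge0.
apply: le_trans (gt0_ler_poweR ri i0 i1 H) _.
by rewrite poweR_EFin -expRM.
Qed.

Lemma real_id (R : realType) (lam a b : R) : (0 < a)%R -> (0 < b)%R -> (1 < lam)%R ->
  let p := ((lam * a + (lam-1) * b)/(lam * a))%R in
  let q := ((lam * a + (lam-1) * b)/((lam-1) * b))%R in
  let m := ((lam-1) * q+1)%R in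
  [/\ (0 < p)%R, (0 < q)%R, (p^-1 + q^-1 = 1)%R, (1 < lam * p)%R /\ (1 < m)%R &
  ((lam * p * (lam * p - 1) * (2^-1  *  a^+2)) / p + (m * (m-1) * (2^-1 * b^+2))/q
    = lam * (lam-1) * (2^-1 * (a+b)^+2))%R].
Proof.
move=> a0 b0 l1 p q m.
have l0 : lam != 0%R by apply/negP => /eqP l; lra.
have l10 : (lam - 1 != 0)%R by apply/negP => /eqP l; lra.
have a00 : a != 0%R by apply/negP => /eqP l; lra.
have b00 : b != 0%R by apply/negP => /eqP l; lra.
have sp : (0 < lam * a + (lam-1) * b)%R by nra.
have s0 : (lam * a + (lam-1) * b != 0)%R by rewrite gt_eqF.
have pp : (0 < p)%R by rewrite /p divr_gt0 // mulr_gt0 // (lt_trans ltr01).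
have qp : (0 < q)%R by rewrite /q divr_gt0 // mulr_gt0 // subr_gt0.
split => //.
- rewrite /p /q; field; by rewrite s0 l0 l10 a00 b00.
- split.
  have -> : (lam * p = 1 + (lam - 1) * (a + b) / a)%R.
    by rewrite /p; field; rewrite l0 a00.
  by rewrite ltrDl; apply: divr_gt0 => //; apply: mulr_gt0; lra.
  by rewrite /m ltrDr mulr_gt0 // subr_gt0.
- rewrite /m /q /p; field.
  by rewrite s0 l0 l10 a00 b00.
Qed.

Lemma Bnd_comp d (Y : measurableType d) (R : realType) (P Q W : probability Y R) (a b : R) :
  (0 < a)%R -> (0 < b)%R -> Bnd P Q (2^-1 * a^+2)%R -> Bnd Q W (2^-1 * b^+2)%R ->
  Bnd P W (2^-1 * (a + b)^+2)%R.
Proof.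
move=> a0 b0 [PQ HP] [QW HQ].
have PW := null_dominates_trans PQ QW.
split => // lam l1.
pose p := ((lam * a + (lam-1) * b)/(lam * a))%R.
pose q := ((lam * a + (lam-1) * b)/((lam-1) * b))%R.
pose m := ((lam-1) * q+1)%R.
have := real_id a0 b0 l1; rewrite /= -/p -/q -/m => -[pp qp pq [lp mq] E].
pose f := fd P Q; pose g := fd Q W.
have step1 : Ip lam P W = \int[P]_y ((f y * g y) `^ (lam-1))%:E.
  rewrite /Ip; apply: ae_eq_integral => //.
  - apply/measurable_EFinP; exact: powfd_meas.
  - apply/measurable_EFinP; apply: (measurableT_comp (measurable_powR _)) => //.
    apply: measurable_funM; exact: fd_meas.
  - have := Radon_Nikodym_SigmaFinite.chain_rule PQ QW (@measurableT _ Y).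
    move/(@ae_dom _ _ _ P W _ PW); apply: filterS => y H /H {H}.
    rewrite /fd /dens => -> /=.
    by rewrite fineM //; apply: Radon_Nikodym_SigmaFinite.f_fin_num.
have step2 : \int[P]_y ((f y * g y) `^ (lam-1))%:E =
    \int[Q]_y ((f y * g y) `^ (lam-1) * f y)%:E.
  apply: cov => //; first by move=> y; apply: powR_ge0.
  apply: (measurableT_comp (measurable_powR _)) => //.
  apply: measurable_funM; exact: fd_meas.
have step3 : \int[Q]_y ((f y * g y) `^ (lam-1) * f y)%:E =
    \int[Q]_y ((f y `^ lam) * (g y `^ (lam-1)))%:E.
  apply: eq_integral => y _; congr EFin.
  rewrite powRM ?fd_ge0 // mulrAC [X in (X * _)%R]mulrC mulr_powRB1 ?fd_ge0 //.
  by rewrite (lt_trans ltr01).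
have H := hoelder Q (powfd_meas lam PQ) (powfd_meas (lam-1) QW) pp qp pq.
move: H; rewrite Lnorm1.
under eq_integral => x _ do rewrite /= ger0_norm ?mulr_ge0 ?powR_ge0 //.
rewrite step1 step2 step3 => H; apply: le_trans H _.
have N1 := @Nbound _ _ _ Q (fun y => f y `^ lam)%R p (lam * p * (lam * p - 1) * (2^-1 * a^+2))%R pp.
have N2 := @Nbound _ _ _ Q (fun y => g y `^ (lam - 1))%R q (m * (m - 1) * (2^-1 * b^+2))%R qp.
apply: le_trans (lee_pmul (Lnorm_ge0 _ _ _) (Lnorm_ge0 _ _ _) (N1 _ _) (N2 _ _)) _.
- by move=> y; apply: powR_ge0.
- under eq_integral do rewrite -powRrM.
  by rewrite -Ip_Q //; apply: HP.
- by move=> y; apply: powR_ge0.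
- under eq_integral do rewrite -powRrM.
  have -> : ((lam-1)*q = m - 1)%R by rewrite /m addrK.
  exact: HQ m mq.
by rewrite -EFinM -expRD E.
Qed.

Lemma prob_fin d (Y : measurableType d) (R : realType) (P : probability Y R) S :
  measurable S -> P S = (fine (P S))%:E.
Proof. by move=> mS; rewrite fineK //; apply: fin_num_measure. Qed.

Lemma Dinf_le d (Y : measurableType d) (R : realType) (P Q : probability Y R) (w : R) :
  Dinf P Q <= w%:E -> forall S, measurable S -> P S <= (expR w)%:E * Q S.
Proof.
rewrite /Dinf; case: asboolP => [PQ|_]; last by rewrite leNgt ltey.
move=> H S mS.
have [P0|Ppos] := leP (P S) 0.
  by apply: le_trans P0 _; apply: mule_ge0; rewrite ?lee_fin ?expR_ge0.
have Q0 : Q S != 0.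
  apply/eqP => Q0; move: Ppos; rewrite lt_neqAle => /andP[/eqP + _]; apply.
  have : Q.-null_set S by apply/measure0_null_setP.
  by move/PQ/(measure0_null_setP _ mS) ->.
have := le_trans (ereal_sup_ubound (ex_intro2 _ _ S (conj mS Ppos) erefl)) H.
rewrite /log_ratio (negbTE Q0) lee_fin.
rewrite (prob_fin P mS) (prob_fin Q mS) in Ppos Q0 *.
have Qge0 : (0 <= fine (Q S))%R by rewrite fine_ge0.
move: (fine (P S)) (fine (Q S)) Ppos Q0 Qge0 => p q; rewrite lte_fin eqe => p0 q0 qge.
have qp : (0 < q)%R by rewrite lt_neqAle eq_sym q0.
rewrite -ler_expR lnK ?posrE ?divr_gt0 // => h.
by rewrite -EFinM lee_fin -ler_pdivrMr.
Qed.

Section graph.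
Context (R : realType) (X : Type) (G : wgraph R X) (n : nat)
  (d : measure_display) (Y : measurableType d)
  (M : ('I_n -> X) -> probability Y R).

Lemma walk_len_ge0 x p y : walk G x p y -> (0 <= walk_len G x p)%R.
Proof.
elim: p x => [|z p IH] x /=; first by [].
move=> [e w]; apply: addr_ge0; [exact: weight_ge0|exact: IH].
Qed.

Lemma differ_eq (i : 'I_n) (x x' : 'I_n -> X) : differ_at i x x' -> x i = x' i -> x = x'.
Proof.
move=> H E; apply: funext => j; have [->|ji] := eqVneq j i; first by [].
exact: H.
Qed.

Definition upd (i : 'I_n) (x : 'I_n -> X) (z : X) := fun j => if j == i then z else x j.

Lemma upd_i i x z : upd i x z i = z.
Proof. by rewrite /upd eqxx. Qed.

Lemma upd_d1 i x z : differ_at i x (upd i x z).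
Proof. by move=> j ji; rewrite /upd (negbTE ji). Qed.

Lemma upd_d2 i x x' z : differ_at i x x' -> differ_at i (upd i x z) x'.
Proof. by move=> H j ji; rewrite /upd (negbTE ji); exact: H. Qed.

Lemma chain_DP (HDP : forall (x x' : 'I_n -> X) (i : 'I_n), differ_at i x x' ->
      edge G (x i) (x' i) ->
      Dinf (M x) (M x') <= (weight G (x i) (x' i))%:E)
  i x' p : forall x0, differ_at i x0 x' -> walk G (x0 i) p (x' i) ->
  forall S, measurable S -> M x0 S <= (expR (walk_len G (x0 i) p))%:E * M x' S.
Proof.
elim: p => [|z p IH] x0 Hd /=.
  move=> E; rewrite (differ_eq Hd E) => S mS.
  by rewrite expR0 mul1e.
move=> [e w] S mS.
have H1 := HDP x0 (upd i x0 z) i (@upd_d1 i x0 z); rewrite upd_i in H1.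
have := Dinf_le (H1 e) mS.
have := IH (upd i x0 z) (@upd_d2 i x0 x' z Hd); rewrite upd_i => /(_ w S mS) H2 H3.
apply: le_trans H3 _.
rewrite expRD EFinM -muleA; apply: lee_wpmul2l => //.
Qed.

Lemma spdist_ge0 x y : 0 <= spdist G x y.
Proof.
apply: le_ereal_inf_tmp => _ [p Hp <-]; rewrite lee_fin.
exact: walk_len_ge0 Hp.
Qed.

Lemma part_DP (HDP : forall (x x' : 'I_n -> X) (i : 'I_n), differ_at i x x' ->
      edge G (x i) (x' i) ->
      Dinf (M x) (M x') <= (weight G (x i) (x' i))%:E) :
  partial_DP (spdist G) M.
Proof.
move=> x x' i Hd e He S mS.
have ch : forall p, walk G (x i) p (x' i) ->
    M x S <= (expR (walk_len G (x i) p))%:E * M x' S.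
  by move=> p Hw; exact: (chain_DP HDP Hd Hw mS).
have [A0|Apos] := leP (M x S) 0.
  by apply: le_trans A0 _; apply: mule_ge0; rewrite ?lee_fin ?expR_ge0.
have [p0 Hp0 Hlt] : exists2 p, walk G (x i) p (x' i) & True.
  have : spdist G (x i) (x' i) < (e + 1)%:E by rewrite He lte_fin ltrDl.
  by move/ereal_inf_lt => [_ [p Hp _] _]; exists p.
rewrite (prob_fin (M x) mS) (prob_fin (M x') mS) in Apos ch *.
have Bge : (0 <= fine (M x' S))%R by rewrite fine_ge0.
move: (fine (M x S)) (fine (M x' S)) Apos ch Bge => a b; rewrite lte_fin => a0 ch b0.
have bpos : (0 < b)%R.
  have := ch _ Hp0; rewrite -EFinM lee_fin => h.
  rewrite lt_neqAle b0 andbT; apply/eqP => b00; move: h; rewrite -b00 mulr0.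
  by rewrite leNgt a0.
have lb : ((ln (a / b))%:E <= spdist G (x i) (x' i)).
  apply: le_ereal_inf_tmp => _ [p Hp <-]; rewrite lee_fin.
  rewrite -ler_expR lnK ?posrE ?divr_gt0 //.
  by rewrite ler_pdivrMr // -lee_fin EFinM; exact: ch.
move: lb; rewrite He lee_fin -ler_expR lnK ?posrE ?divr_gt0 // => h.
by rewrite -EFinM lee_fin -ler_pdivrMr.
Qed.

Lemma chain_CDP (HC : forall (x x' : 'I_n -> X) (i : 'I_n), differ_at i x x' ->
      edge G (x i) (x' i) ->
      Dstar (M x) (M x') <= (2^-1 * (weight G (x i) (x' i)) ^+ 2)%:E)
  i x' p : forall x0, differ_at i x0 x' -> walk G (x0 i) p (x' i) ->
  forall c : R, (walk_len G (x0 i) p < c)%R -> Bnd (M x0) (M x') (2^-1 * c^+2)%R.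
Proof.
elim: p => [|z p IH] x0 Hd /=.
  move=> E; rewrite (differ_eq Hd E) => c _.
  apply: Bnd_le (Bnd_self _); apply: mulr_ge0 => //; exact: sqr_ge0.
move=> [e w] c Hc.
have w0 := weight_ge0 e.
have L0 := walk_len_ge0 w.
set wt := weight G (x0 i) z in Hc w0; set L := walk_len G z p in Hc L0.
have Ewt : weight G (x0 i) z = wt by [].
have EL : walk_len G z p = L by [].
clearbody wt L.
have [t t0 tE] : exists2 t, (0 < t)%R & c = (wt + L + 2 * t)%R.
  exists ((c - wt - L) / 2)%R; first by rewrite divr_gt0 //; lra.
  rewrite [(2 * _)%R]mulrC divfK ?pnatr_eq0 //; ring.
pose a := (wt + t)%R; pose b := (L + t)%R.
have a0 : (0 < a)%R by rewrite /a; lra.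
have b0 : (0 < b)%R by rewrite /b; lra.
have bL : (L < b)%R by rewrite /b; lra.
have H1 := HC x0 (upd i x0 z) i (@upd_d1 i x0 z); rewrite upd_i Ewt in H1.
have B1 := Dstar_Bnd (H1 e).
have B1' : Bnd (M x0) (M (upd i x0 z)) (2^-1 * a^+2)%R.
  apply: Bnd_le B1; rewrite ler_pM2l ?invr_gt0 //.
  rewrite ler_sqr ?nnegrE //; [rewrite /a; lra|exact: ltW].
have := IH (upd i x0 z) (@upd_d2 i x0 x' z Hd); rewrite upd_i EL => /(_ w b bL) B2.
have := Bnd_comp a0 b0 B1' B2.
by have -> : (a + b = c)%R by rewrite /a /b tE; ring.
Qed.

Lemma part_CDP (HC : forall (x x' : 'I_n -> X) (i : 'I_n), differ_at i x x' ->
      edge G (x i) (x' i) ->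
      Dstar (M x) (M x') <= (2^-1 * (weight G (x i) (x' i)) ^+ 2)%:E) :
  partial_CDP (spdist G) M.
Proof.
move=> x x' i Hd.
have := spdist_ge0 (x i) (x' i).
case He : (spdist G (x i) (x' i)) => [e| |] //; last first.
  by move=> _; rewrite mulyy gt0_muley ?lte_fin ?invr_gt0 // leey.
rewrite lee_fin => e0.
rewrite [X in _ <= X](_ : _ = (2^-1 * (e * e))%R%:E) //; apply/lee_addgt0Pr => eps eps0.
pose del := (eps / (e + 1 + eps))%R.
have den : (0 < e + 1 + eps)%R by lra.
have dd : (del * (e + 1 + eps) = eps)%R by rewrite /del mulfVK // gt_eqF.
have d0 : (0 < del)%R by rewrite /del divr_gt0.
have d1 : (del < 1)%R by rewrite /del ltr_pdivrMr // mul1r; lra.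
have [p Hp Hlt] : exists2 p, walk G (x i) p (x' i) & (walk_len G (x i) p < e + del)%R.
  have : spdist G (x i) (x' i) < (e + del)%:E by rewrite He lte_fin ltrDl.
  by move/ereal_inf_lt => [_ [p Hp <-]]; rewrite lte_fin => h; exists p.
have := Bnd_Dstar (chain_CDP HC Hd Hp Hlt).
move/le_trans; apply; rewrite -EFinD lee_fin.
nra.
Qed.
End graph.

Unset Implicit Arguments.
Local Close Scope charge_scope.

Theorem lemma2p7 (R : realType) (X : Type) (G : wgraph R X) (n : nat)
  (d : measure_display) (Y : measurableType d)
  (M : ('I_n -> X) -> probability Y R) :
  ((forall (x x' : 'I_n -> X) (i : 'I_n), differ_at i x x' ->
      edge G (x i) (x' i) ->
      Dinf (M x) (M x') <= (weight G (x i) (x' i))%:E) ->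
    partial_DP (spdist G) M) /\
  ((forall (x x' : 'I_n -> X) (i : 'I_n), differ_at i x x' ->
      edge G (x i) (x' i) ->
      Dstar (M x) (M x') <= (2^-1 * (weight G (x i) (x' i)) ^+ 2)%:E) ->
    partial_CDP (spdist G) M).
Proof.
split => H; [exact: part_DP H | exact: part_CDP H].
Qed.
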